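(* For every $N$-partite pure state $\left|\psi\right\rangle\in\mathbb{C}^{d_1}\otimes\cdots\otimes\mathbb{C}^{d_N}$, $$E_{MB}(\left|\psi\right\rangle)\ \ge\ E_R(\left|\psi\right\rangle).$$ More precisely, if an adaptive local measurement scheme with product outcome vectors $|e_{\mathbf{i}}\rangle=|\phi^{(1)}_{i_1}\rangle\otimes\cdots\otimes|\phi^{(N)}_{i_N|i_1\dots i_{N-1}}\rangle$ has outcome distribution $\mathbf{p}$, then the fully separable state $\omega=\sum_{\mathbf{i}}p_{\mathbf{i}}|e_{\mathbf{i}}\rangle\langle e_{\mathbf{i}}|$ satisfies $-\langle\psi|\log_2\omega|\psi\rangle=H(\mathbf{p})$.
   Context: Entanglement measurement bound (EMB). Let $\left|\psi\right\rangle$ be a unit vector in $\mathcal{H}_1\otimes\cdots\otimes\mathcal{H}_N$, $\mathcal{H}_j=\mathbb{C}^{d_j}$. An adaptive local measurement scheme consists of: an ordering $\pi$ of the parties $\{1,\dots,N\}$; an orthonormal basis $\{|\phi^{(1)}_{i_1}\rangle\}_{i_1}$ of $\mathcal{H}_{\pi(1)}$; and, for each $k=2,\dots,N$ and each outcome history $(i_1,\dots,i_{k-1})$, an orthonormal basis $\{|\phi^{(k)}_{i_k|i_1\dots i_{k-1}}\rangle\}_{i_k}$ of $\mathcal{H}_{\pi(k)}$ (which may depend on the history). Its outcome distribution is $p_{i_1\dots i_N}=\big|\big(\langle\phi^{(1)}_{i_1}|\otimes\langle\phi^{(2)}_{i_2|i_1}|\otimes\cdots\otimes\langle\phi^{(N)}_{i_N|i_1\dots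 i_{N-1}}|\big)\left|\psi\right\rangle\big|^2$, where the $k$-th bra acts on the tensor factor of party $\pi(k)$. The EMB is $E_{MB}(\left|\psi\right\rangle)=\min H(\mathbf{p})$, where $H(\mathbf{p})=-\sum p_{i_1\dots i_N}\log_2 p_{i_1\dots i_N}$ is the Shannon entropy and the minimum is over all adaptive local measurement schemes (including all orderings of the parties). Relative entropy of entanglement: $E_R(\left|\psi\right\rangle)=\min_{\sigma}\big(-\langle\psi|\log_2\sigma|\psi\rangle\big)$, the minimum over all fully separable states $\sigma$ (convex combinations of $N$-fold product states $\sigma_1\otimes\cdots\otimes\sigma_N$), with the convention that the value is $+\infty$ if $\left|\psi\right\rangle\notin\mathrm{supp}\,\sigma$. *)

(* Defs.v *)
From Stdlib Require Export Reals List Permutation.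
Export ListNotations.
Open Scope R_scope.

Record C := mkC { Cre : R; Cim : R }.
Definition C0 : C := mkC 0 0.
Definition C1 : C := mkC 1 0.
Definition RtoC (r : R) : C := mkC r 0.
Definition Cadd (z w : C) : C := mkC (Cre z + Cre w) (Cim z + Cim w).
Definition Cmul (z w : C) : C :=
  mkC (Cre z * Cre w - Cim z * Cim w) (Cre z * Cim w + Cim z * Cre w).
Definition Cconj (z : C) : C := mkC (Cre z) (- Cim z).
Definition Cnorm2 (z : C) : R := Cre z * Cre z + Cim z * Cim z.

Definition Csum {A : Type} (l : list A) (f : A -> C) : C :=
  fold_right (fun a acc => Cadd (f a) acc) C0 l.
Definition Cprod {A : Type} (l : list A) (f : A -> C) : C :=
  fold_right (fun a acc => Cmul (f a) acc) C1 l.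
Definition Rsum {A : Type} (l : list A) (f : A -> R) : R :=
  fold_right (fun a acc => f a + acc) 0 l.

Fixpoint all_idx (ds : list nat) : list (list nat) :=
  match ds with
  | [] => [[]]
  | a :: ds' => flat_map (fun x => map (cons x) (all_idx ds')) (seq 0 a)
  end.

Definition log2 (x : R) : R := ln x / ln 2.

(* Shannon entropy  H(p) = - sum p log2 p   (0 log 0 = 0 since 0 * _ = 0) *)
Definition entropy {A : Type} (l : list A) (p : A -> R) : R :=
  - Rsum l (fun i => p i * log2 (p i)).

(* A vector is a function on multi-indices
   j = [j_1;...;j_N] with j_n < d_n (values elsewhere are irrelevant);
   the standard basis is the tensor product of the local standard bases. *)
Definition gvec := list nat -> C.
Definition gmat := list nat -> list nat -> C.

Definition ginner (ds : list nat) (u v : gvec) : C :=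
  Csum (all_idx ds) (fun j => Cmul (Cconj (u j)) (v j)).

Definition unit_vec (ds : list nat) (psi : gvec) : Prop := ginner ds psi psi = C1.

Definition linner (d : nat) (u v : nat -> C) : C :=
  Csum (seq 0 d) (fun x => Cmul (Cconj (u x)) (v x)).

Definition local_onb (d : nat) (b : nat -> nat -> C) : Prop :=
  forall a a', (a < d)%nat -> (a' < d)%nat ->
    linner d (b a) (b a') = if Nat.eqb a a' then C1 else C0.

(* ---------- adaptive local measurement schemes ----------
   perm = [pi(1); ...; pi(N)] (parties numbered 0..N-1),
   B h a = a-th vector of the orthonormal basis of H_{pi(k+1)} used at step
   k+1 after the outcome history h = [i_1;...;i_k]. *)
Definition dims_in_order (ds perm : list nat) : list nat :=
  map (fun n => nth n ds 0%nat) perm.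

Definition is_scheme (ds perm : list nat) (B : list nat -> nat -> nat -> C) : Prop :=
  Permutation perm (seq 0 (length ds)) /\
  forall (k : nat) (h : list nat), (k < length ds)%nat ->
    In h (all_idx (firstn k (dims_in_order ds perm))) ->
    local_onb (nth k (dims_in_order ds perm) 0%nat) (B h).

Definition outcomes (ds perm : list nat) : list (list nat) :=
  all_idx (dims_in_order ds perm).

(* |e_i> = |phi^(1)_{i_1}> (x) |phi^(2)_{i_2|i_1}> (x) ... , the k-th factor
   sitting in the tensor factor of party pi(k) *)
Definition outcome_vec (ds perm : list nat) (B : list nat -> nat -> nat -> C)
  (i : list nat) : gvec := fun j =>
  Cprod (seq 0 (length ds))
    (fun k => B (firstn k i) (nth k i 0%nat) (nth (nth k perm 0%nat) j 0%nat)).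

Definition prob (ds perm : list nat) (B : list nat -> nat -> nat -> C)
  (psi : gvec) (i : list nat) : R :=
  Cnorm2 (ginner ds (outcome_vec ds perm B i) psi).

Definition omega (ds perm : list nat) (B : list nat -> nat -> nat -> C)
  (psi : gvec) : gmat := fun j j' =>
  Csum (outcomes ds perm) (fun i =>
    Cmul (RtoC (prob ds perm B psi i))
         (Cmul (outcome_vec ds perm B i j) (Cconj (outcome_vec ds perm B i j')))).

Definition ldensity (d : nat) (rho : nat -> nat -> C) : Prop :=
  (forall x y, (x < d)%nat -> (y < d)%nat -> rho y x = Cconj (rho x y)) /\
  (forall v : nat -> C,
     0 <= Cre (linner d v (fun x => Csum (seq 0 d) (fun y => Cmul (rho x y) (v y))))) /\
  Csum (seq 0 d) (fun x => rho x x) = C1.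

Definition fully_separable (ds : list nat) (sigma : gmat) : Prop :=
  exists (J : nat) (q : nat -> R) (rho : nat -> nat -> nat -> nat -> C),
    (forall j, (j < J)%nat -> 0 <= q j) /\
    Rsum (seq 0 J) q = 1 /\
    (forall j n, (j < J)%nat -> (n < length ds)%nat ->
        ldensity (nth n ds 0%nat) (rho j n)) /\
    forall i i', In i (all_idx ds) -> In i' (all_idx ds) ->
      sigma i i' =
      Csum (seq 0 J) (fun j =>
        Cmul (RtoC (q j))
             (Cprod (seq 0 (length ds)) (fun n => rho j n (nth n i 0%nat) (nth n i' 0%nat)))).

(* ---------- -<psi| log2 sigma |psi> ----------
   neg_log_expect ds sigma psi v  <->  the value -<psi|log2 sigma|psi> is the
   finite real number v.  It is defined through a spectral decomposition
   sigma = sum_k lam_k |u_k><u_k| ({u_k} an orthonormal basis, lam_k >= 0):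
   psi must lie in supp sigma (<u_k|psi> = 0 whenever lam_k = 0), and then
   -<psi|log2 sigma|psi> = - sum_k |<u_k|psi>|^2 log2 lam_k.
   If psi is not in supp sigma, no v satisfies it (the value is +infinity). *)
Definition neg_log_expect (ds : list nat) (sigma : gmat) (psi : gvec) (v : R) : Prop :=
  exists (K : list (list nat)) (u : list nat -> gvec) (lam : list nat -> R),
    NoDup K /\ length K = length (all_idx ds) /\
    (forall k k', In k K -> In k' K ->
        ginner ds (u k) (u k') = if list_eq_dec Nat.eq_dec k k' then C1 else C0) /\
    (forall k, In k K -> 0 <= lam k) /\
    (forall i i', In i (all_idx ds) -> In i' (all_idx ds) ->
        sigma i i' = Csum K (fun k => Cmul (RtoC (lam k)) (Cmul (u k i) (Cconj (u k i'))))) /\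
    (forall k, In k K -> lam k = 0 -> ginner ds (u k) psi = C0) /\
    v = - Rsum K (fun k => Cnorm2 (ginner ds (u k) psi) * log2 (lam k)).

Definition EMB_value (ds : list nat) (psi : gvec) (x : R) : Prop :=
  exists perm B, is_scheme ds perm B /\
    x = entropy (outcomes ds perm) (prob ds perm B psi).

Definition ER_value (ds : list nat) (psi : gvec) (x : R) : Prop :=
  exists sigma, fully_separable ds sigma /\ neg_log_expect ds sigma psi x.

Definition is_min (P : R -> Prop) (m : R) : Prop := P m /\ forall x, P x -> m <= x.

(* Main.v *)
Require Import Defs.
From Stdlib Require Import Lra Lia.

Module Bridge.
From HB Require Import structures.
From mathcomp Require Import all_boot all_order all_algebra.
From mathcomp Require Import Rstruct.
From mathcomp Require Import complex.
Import Order.TTheory GRing.Theory Num.Theory.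
Local Open Scope ring_scope.

Definition phi (z : C) : R[i] := Complex (Cre z) (Cim z).

Lemma phi_inj z w : phi z = phi w -> z = w.
Proof. by case: z w => a b [c d] [-> ->]. Qed.

Lemma phi_add z w : phi (Cadd z w) = phi z + phi w.
Proof. by case: z w => a b [c d]. Qed.

Lemma phi_mul z w : phi (Cmul z w) = phi z * phi w.
Proof. by case: z w => a b [c d]. Qed.

Lemma phi0 : phi C0 = 0. Proof. by []. Qed.
Lemma phi1 : phi C1 = 1. Proof. by []. Qed.

Lemma phi_sum_iota (f : nat -> C) m n :
  phi (Csum (List.seq m n) f) = \sum_(i <- iota m n) phi (f i).
Proof.
elim: n m => [|n IH] m /=; first by rewrite big_nil.
by rewrite big_cons phi_add IH.
Qed.

Lemma phi_sum (f : nat -> C) n :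
  phi (Csum (List.seq 0 n) f) = \sum_(i < n) phi (f i).
Proof. rewrite phi_sum_iota. rewrite -(big_mkord xpredT (fun i => phi (f i))). by rewrite /index_iota subn0. Qed.

Lemma phi_delta (a b : nat) : phi (if Nat.eqb a b then C1 else C0) = (a == b)%:R.
Proof.
case: (PeanoNat.Nat.eqb_spec a b) => [->|/eqP/negbTE ->]; first by rewrite eqxx.
by [].
Qed.

Lemma cols_orthonormal (n : nat) (U : nat -> nat -> C) :
  (forall a b, (a < n)%coq_nat -> (b < n)%coq_nat ->
     Csum (List.seq 0 n) (fun x => Cmul (Cconj (U a x)) (U b x)) =
     if Nat.eqb a b then C1 else C0) ->
  forall x y, (x < n)%coq_nat -> (y < n)%coq_nat ->
     Csum (List.seq 0 n) (fun a => Cmul (U a x) (Cconj (U a y))) =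
     if Nat.eqb x y then C1 else C0.
Proof.
move=> H x y hx hy.
pose A : 'M[R[i]]_n := \matrix_(a < n, j < n) phi (Cconj (U a j)).
pose Bm : 'M[R[i]]_n := \matrix_(j < n, b < n) phi (U b j).
have AB : A *m Bm = 1%:M.
  apply/matrixP => a b; rewrite !mxE.
  have := H a b (ssrnat.ltP (ltn_ord a)) (ssrnat.ltP (ltn_ord b)).
  move/(congr1 phi); rewrite phi_sum phi_delta => E.
  have -> : (a == b :> 'I_n) = (nat_of_ord a == nat_of_ord b) by [].
  rewrite -E; apply: eq_bigr => j _; by rewrite !mxE phi_mul.
have BA := mulmx1C AB.
apply: phi_inj; rewrite phi_sum phi_delta.
have hx' : (x < n)%N by apply/ssrnat.ltP.
have hy' : (y < n)%N by apply/ssrnat.ltP.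
have := congr1 (fun M : 'M[R[i]]_n => M (Ordinal hx') (Ordinal hy')) BA.
rewrite /= !mxE => E.
have <- : (Ordinal hx' == Ordinal hy') = (x == y) by [].
rewrite -E; apply: eq_bigr => j _; by rewrite !mxE phi_mul.
Qed.
End Bridge.


Lemma C_ext z w : Cre z = Cre w -> Cim z = Cim w -> z = w.
Proof. destruct z, w; simpl; intros; subst; reflexivity. Qed.

Ltac Csolve := apply C_ext; simpl; ring.

Section Sums.
Context {A : Type}.

Lemma Csum_ext (l : list A) f g : (forall a, In a l -> f a = g a) -> Csum l f = Csum l g.
Proof. induction l; simpl; intros H; auto. rewrite H, IHl; auto. Qed.

Lemma Rsum_ext (l : list A) f g : (forall a, In a l -> f a = g a) -> Rsum l f = Rsum l g.
Proof. induction l; simpl; intros H; auto. rewrite H, IHl; auto. Qed.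

Lemma Cprod_ext (l : list A) f g : (forall a, In a l -> f a = g a) -> Cprod l f = Cprod l g.
Proof. induction l; simpl; intros H; auto. rewrite H, IHl; auto. Qed.

Lemma Csum_add (l : list A) f g :
  Csum l (fun a => Cadd (f a) (g a)) = Cadd (Csum l f) (Csum l g).
Proof. induction l; simpl. Csolve. rewrite IHl. Csolve. Qed.

Lemma Csum_mul_l (l : list A) c f :
  Csum l (fun a => Cmul c (f a)) = Cmul c (Csum l f).
Proof. induction l; simpl. Csolve. rewrite IHl. Csolve. Qed.

Lemma Csum_mul_r (l : list A) c f :
  Csum l (fun a => Cmul (f a) c) = Cmul (Csum l f) c.
Proof. induction l; simpl. Csolve. rewrite IHl. Csolve. Qed.

Lemma Csum_conj (l : list A) f :
  Cconj (Csum l f) = Csum l (fun a => Cconj (f a)).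
Proof. induction l; simpl. Csolve. rewrite <- IHl. Csolve. Qed.

Lemma Csum_zero (l : list A) f : (forall a, In a l -> f a = C0) -> Csum l f = C0.
Proof. induction l; simpl; intros H; auto. rewrite H, IHl; auto. Csolve. Qed.

Lemma Rsum_Cre (l : list A) f : Rsum l (fun a => Cre (f a)) = Cre (Csum l f).
Proof. induction l; simpl; auto. rewrite IHl; auto. Qed.

Lemma Cprod_mul (l : list A) f g :
  Cprod l (fun a => Cmul (f a) (g a)) = Cmul (Cprod l f) (Cprod l g).
Proof. induction l; simpl. Csolve. rewrite IHl. Csolve. Qed.

Lemma Cprod_conj (l : list A) f :
  Cconj (Cprod l f) = Cprod l (fun a => Cconj (f a)).
Proof. induction l; simpl. Csolve. rewrite <- IHl. Csolve. Qed.

Lemma Cprod_one (l : list A) f : (forall a, In a l -> f a = C1) -> Cprod l f = C1.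
Proof. induction l; simpl; intros H; auto. rewrite H, IHl; auto. Csolve. Qed.

Lemma Cprod_zero (l : list A) f a : In a l -> f a = C0 -> Cprod l f = C0.
Proof.
  induction l as [|b l IH]; simpl; intros Hin H; [contradiction|].
  destruct Hin as [<-|Hin]. rewrite H. Csolve. rewrite IH; auto. Csolve.
Qed.

Lemma Cprod_perm (l1 l2 : list A) f : Permutation l1 l2 -> Cprod l1 f = Cprod l2 f.
Proof.
  induction 1; simpl; auto.
  - rewrite IHPermutation; auto.
  - Csolve.
  - congruence.
Qed.

Lemma Csum_app (l1 l2 : list A) f : Csum (l1 ++ l2) f = Cadd (Csum l1 f) (Csum l2 f).
Proof. induction l1; simpl. Csolve. rewrite IHl1. Csolve. Qed.

End Sums.

Lemma Csum_swap {A B : Type} (l1 : list A) (l2 : list B) f :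
  Csum l1 (fun a => Csum l2 (f a)) = Csum l2 (fun b => Csum l1 (fun a => f a b)).
Proof.
  induction l1; simpl.
  - induction l2; simpl; auto. rewrite <- IHl2. Csolve.
  - rewrite IHl1. symmetry. apply (Csum_add l2 (f a)).
Qed.

Lemma Csum_flat_map {A B : Type} (l : list A) (g : A -> list B) f :
  Csum (flat_map g l) f = Csum l (fun a => Csum (g a) f).
Proof. induction l; simpl; auto. rewrite Csum_app, IHl. reflexivity. Qed.

Lemma Csum_map {A B : Type} (l : list A) (h : A -> B) f :
  Csum (map h l) f = Csum l (fun a => f (h a)).
Proof. induction l; simpl; auto. rewrite IHl. reflexivity. Qed.

Lemma Cprod_map {A B : Type} (l : list A) (h : A -> B) f :
  Cprod (map h l) f = Cprod l (fun a => f (h a)).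
Proof. induction l; simpl; auto. rewrite IHl. reflexivity. Qed.


Lemma Csum_seqS (g : nat -> C) n :
  Csum (seq 0 (S n)) g = Cadd (g 0%nat) (Csum (seq 0 n) (fun k => g (S k))).
Proof. simpl. rewrite <- seq_shift, Csum_map. reflexivity. Qed.

Lemma Cprod_seqS (g : nat -> C) n :
  Cprod (seq 0 (S n)) g = Cmul (g 0%nat) (Cprod (seq 0 n) (fun k => g (S k))).
Proof. simpl. rewrite <- seq_shift, Cprod_map. reflexivity. Qed.

Lemma Rsum_seqS (g : nat -> R) n :
  Rsum (seq 0 (S n)) g = g 0%nat + Rsum (seq 0 n) (fun k => g (S k)).
Proof.
  simpl. f_equal. rewrite <- seq_shift. generalize (seq 0 n). induction l; simpl; congruence.
Qed.

Lemma Csum_nth {A} (l : list A) d f :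
  Csum l f = Csum (seq 0 (length l)) (fun k => f (nth k l d)).
Proof.
  induction l; simpl; auto. rewrite <- seq_shift, Csum_map, IHl. reflexivity.
Qed.

Lemma Rsum_nth {A} (l : list A) d f :
  Rsum l f = Rsum (seq 0 (length l)) (fun k => f (nth k l d)).
Proof.
  induction l; simpl; auto. rewrite IHl. f_equal.
  rewrite <- seq_shift. generalize (seq 0 (length l)). induction l0; simpl; congruence.
Qed.

Lemma Csum_delta (l : list nat) (g : nat -> C) y :
  NoDup l -> In y l ->
  Csum l (fun x => Cmul (g x) (if Nat.eqb y x then C1 else C0)) = g y.
Proof.
  induction l as [|a l IH]; simpl; intros Hnd Hin; [contradiction|].
  inversion Hnd; subst.
  destruct (PeanoNat.Nat.eqb_spec y a) as [->|Hne].
  - rewrite Csum_zero. Csolve.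
    intros x Hx. destruct (PeanoNat.Nat.eqb_spec a x); [subst; contradiction|]. Csolve.
  - destruct Hin as [->|Hin]; [congruence|]. rewrite IH; auto. Csolve.
Qed.

Lemma all_idx_spec ds j :
  In j (all_idx ds) <->
  length j = length ds /\ (forall n, (n < length ds)%nat -> (nth n j 0 < nth n ds 0)%nat).
Proof.
  revert j; induction ds as [|a ds IH]; intros j; simpl.
  - split.
    + intros [<-|[]]. split; auto. intros; lia.
    + intros [Hl _]. destruct j; simpl in *; [auto|discriminate].
  - rewrite in_flat_map. split.
    + intros [x [Hx Hj]]. apply in_seq in Hx. apply in_map_iff in Hj.
      destruct Hj as [j' [<- Hj']]. apply IH in Hj'. destruct Hj' as [Hl Hn].
      simpl. split; [lia|]. intros [|n] Hn'; simpl; [lia|]. apply Hn; lia.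
    + intros [Hl Hn]. destruct j as [|x j']; simpl in Hl; [discriminate|].
      exists x. split.
      * apply in_seq. specialize (Hn 0%nat). simpl in Hn. lia.
      * apply in_map. apply IH. split; [lia|]. intros n Hn'.
        specialize (Hn (S n)). simpl in Hn. apply Hn. lia.
Qed.

Lemma NoDup_all_idx ds : NoDup (all_idx ds).
Proof.
  induction ds as [|a ds IH]; simpl.
  - constructor; [intros []|constructor].
  - generalize (seq_NoDup a 0). generalize (seq 0 a). intros l Hl.
    induction l as [|x l IHl]; simpl; [constructor|].
    inversion Hl; subst. apply NoDup_app.
    + apply FinFun.Injective_map_NoDup; auto. intros u v H; inversion H; auto.
    + apply IHl; auto.
    + intros j Hj Hj'. apply in_map_iff in Hj. destruct Hj as [j1 [<- _]].
      apply in_flat_map in Hj'. destruct Hj' as [y [Hy Hj']].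
      apply in_map_iff in Hj'. destruct Hj' as [j2 [E _]]. inversion E; subst. contradiction.
Qed.

Lemma length_flat_map_const {A B} (l : list A) (g : A -> list B) L :
  (forall a, In a l -> length (g a) = L) -> length (flat_map g l) = (length l * L)%nat.
Proof.
  induction l; simpl; intros H; auto. rewrite length_app, H, IHl; auto.
Qed.

Lemma length_all_idx ds : length (all_idx ds) = fold_right mult 1%nat ds.
Proof.
  induction ds; simpl; auto. rewrite (length_flat_map_const _ _ (fold_right mult 1%nat ds)).
  - rewrite length_seq. reflexivity.
  - intros. rewrite length_map. auto.
Qed.

Lemma prod_perm l1 l2 : Permutation l1 l2 -> fold_right mult 1%nat l1 = fold_right mult 1%nat l2.
Proof. induction 1; simpl; lia. Qed.

Lemma map_nth_seq (l : list nat) :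
  map (fun n => nth n l 0%nat) (seq 0 (length l)) = l.
Proof.
  induction l; simpl; auto. f_equal. rewrite <- seq_shift, map_map. simpl. exact IHl.
Qed.

Lemma map_nth_seq' {A} (f : nat -> A) (l : list nat) :
  map (fun n => f (nth n l 0%nat)) (seq 0 (length l)) = map f l.
Proof. rewrite <- map_nth_seq at 2. rewrite map_map. reflexivity. Qed.

Lemma fubini ds (g : nat -> nat -> C) :
  Csum (all_idx ds) (fun j => Cprod (seq 0 (length ds)) (fun n => g n (nth n j 0%nat))) =
  Cprod (seq 0 (length ds)) (fun n => Csum (seq 0 (nth n ds 0%nat)) (g n)).
Proof.
  revert g; induction ds as [|a ds IH]; intros g; simpl.
  - Csolve.
  - rewrite Csum_flat_map.
    rewrite <- seq_shift, Cprod_map.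
    transitivity (Csum (seq 0 a) (fun x => Cmul (g 0%nat x)
       (Cprod (seq 0 (length ds)) (fun n => Csum (seq 0 (nth n ds 0%nat)) (g (S n)))))).
    + apply Csum_ext. intros x _. rewrite Csum_map.
      rewrite <- (IH (fun n => g (S n))). rewrite <- Csum_mul_l.
      apply Csum_ext. intros j _. simpl. rewrite Cprod_map. reflexivity.
    + apply Csum_mul_r.
Qed.

Lemma firstn_all_idx ds i k :
  In i (all_idx ds) -> In (firstn k i) (all_idx (firstn k ds)).
Proof.
  rewrite !all_idx_spec. intros [Hl Hn]. rewrite !length_firstn. split; [lia|].
  intros n Hn'. rewrite !nth_firstn. destruct (PeanoNat.Nat.ltb_spec n k); [|lia].
  apply Hn. lia.
Qed.

Lemma first_diff (i i' : list nat) :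
  length i = length i' -> i <> i' ->
  exists k, (k < length i)%nat /\ firstn k i = firstn k i' /\ nth k i 0%nat <> nth k i' 0%nat.
Proof.
  revert i'; induction i as [|a i IH]; intros [|a' i'] Hl Hne; simpl in *; try discriminate.
  - congruence.
  - destruct (PeanoNat.Nat.eq_dec a a') as [<-|Ha].
    + destruct (IH i') as [k [Hk [Hf Hn]]]; [lia|congruence|].
      exists (S k). simpl. split; [lia|]. split; [congruence|auto].
    + exists 0%nat. simpl. split; [lia|]. split; auto.
Qed.

Fixpoint idx (n : nat) (l : list nat) : nat :=
  match l with [] => 0%nat | a :: l' => if Nat.eqb a n then 0%nat else S (idx n l') end.

Lemma idx_nth n l : In n l -> nth (idx n l) l 0%nat = n /\ (idx n l < length l)%nat.
Proof.
  induction l as [|a l IH]; simpl; intros H; [contradiction|].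
  destruct (PeanoNat.Nat.eqb_spec a n). split; auto; lia.
  destruct H as [->|H]; [congruence|]. destruct (IH H). split; auto; lia.
Qed.

Lemma nth_idx l k : NoDup l -> (k < length l)%nat -> idx (nth k l 0%nat) l = k.
Proof.
  revert k; induction l as [|a l IH]; intros k Hnd Hk; simpl in *; [lia|].
  inversion Hnd; subst. destruct k as [|k].
  - rewrite PeanoNat.Nat.eqb_refl. auto.
  - destruct (PeanoNat.Nat.eqb_spec a (nth k l 0%nat)) as [E|E].
    + exfalso. apply H1. rewrite E. apply nth_In. lia.
    + rewrite IH; auto. lia.
Qed.

Section Perm.
Variable N : nat.
Variable perm : list nat.
Hypothesis Hperm : Permutation perm (seq 0 N).

Lemma perm_length : length perm = N.
Proof. rewrite (Permutation_length Hperm). apply length_seq. Qed.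

Lemma perm_NoDup : NoDup perm.
Proof. apply (Permutation_NoDup (Permutation_sym Hperm)). apply seq_NoDup. Qed.

Lemma perm_In n : In n perm <-> (n < N)%nat.
Proof.
  split; intros H.
  - apply (Permutation_in _ Hperm) in H. apply in_seq in H. lia.
  - apply (Permutation_in _ (Permutation_sym Hperm)). apply in_seq. lia.
Qed.

Lemma perm_nth_lt k : (k < N)%nat -> (nth k perm 0%nat < N)%nat.
Proof. intros. apply perm_In. apply nth_In. rewrite perm_length. auto. Qed.

Lemma idx_lt n : (n < N)%nat -> (idx n perm < N)%nat.
Proof. intros H. apply perm_In in H. rewrite <- perm_length. apply idx_nth; auto. Qed.

Lemma nth_idx_perm n : (n < N)%nat -> nth (idx n perm) perm 0%nat = n.
Proof. intros H. apply perm_In in H. apply idx_nth; auto. Qed.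

Lemma idx_nth_perm k : (k < N)%nat -> idx (nth k perm 0%nat) perm = k.
Proof. intros. apply nth_idx. apply perm_NoDup. rewrite perm_length; auto. Qed.

Lemma Cprod_reindex (F : nat -> nat -> C) :
  Cprod (seq 0 N) (fun k => F k (nth k perm 0%nat)) =
  Cprod (seq 0 N) (fun n => F (idx n perm) n).
Proof.
  transitivity (Cprod (seq 0 N) (fun k => (fun n => F (idx n perm) n) (nth k perm 0%nat))).
  - apply Cprod_ext. intros k Hk. apply in_seq in Hk. rewrite idx_nth_perm; auto. lia.
  - rewrite <- (Cprod_map (seq 0 N) (fun k => nth k perm 0%nat) (fun n => F (idx n perm) n)).
    rewrite <- perm_length at 1. rewrite map_nth_seq.
    apply Cprod_perm. auto.
Qed.
End Perm.

Section Scheme.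
Variables (ds perm : list nat) (B : list nat -> nat -> nat -> C).
Hypothesis Hs : is_scheme ds perm B.

Let Hperm : Permutation perm (seq 0 (length ds)) := proj1 Hs.

Lemma dims_length : length (dims_in_order ds perm) = length ds.
Proof. unfold dims_in_order. rewrite length_map. apply (perm_length _ _ Hperm). Qed.

Lemma nth_dims k : (k < length ds)%nat ->
  nth k (dims_in_order ds perm) 0%nat = nth (nth k perm 0%nat) ds 0%nat.
Proof.
  intros Hk. unfold dims_in_order.
  rewrite (nth_indep _ 0%nat ((fun n => nth n ds 0%nat) 0%nat)).
  - exact (map_nth (fun n => nth n ds 0%nat) perm 0%nat k).
  - rewrite length_map, (perm_length _ _ Hperm). auto.
Qed.

Lemma dims_perm : Permutation (dims_in_order ds perm) ds.
Proof.
  unfold dims_in_order.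
  transitivity (map (fun n => nth n ds 0%nat) (seq 0 (length ds))).
  - apply Permutation_map. auto.
  - rewrite map_nth_seq. reflexivity.
Qed.

Lemma length_outcomes : length (outcomes ds perm) = length (all_idx ds).
Proof.
  unfold outcomes. rewrite !length_all_idx. apply prod_perm. apply dims_perm.
Qed.

Lemma outcome_inner i i' :
  ginner ds (outcome_vec ds perm B i) (outcome_vec ds perm B i') =
  Cprod (seq 0 (length ds)) (fun k =>
    linner (nth k (dims_in_order ds perm) 0%nat)
      (B (firstn k i) (nth k i 0%nat)) (B (firstn k i') (nth k i' 0%nat))).
Proof.
  set (b := fun k => B (firstn k i) (nth k i 0%nat)).
  set (b' := fun k => B (firstn k i') (nth k i' 0%nat)).
  set (g' := fun k x => Cmul (Cconj (b k x)) (b' k x)).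
  set (F' := fun k n => Csum (seq 0 (nth n ds 0%nat)) (g' k)).
  unfold ginner, outcome_vec.
  transitivity (Cprod (seq 0 (length ds)) (fun n => F' (idx n perm) n)).
  - transitivity (Csum (all_idx ds) (fun j => Cprod (seq 0 (length ds))
        (fun n => (fun n x => g' (idx n perm) x) n (nth n j 0%nat)))).
    + apply Csum_ext. intros j _. rewrite Cprod_conj, <- Cprod_mul.
      exact (Cprod_reindex _ _ Hperm (fun k x => g' k (nth x j 0%nat))).
    + exact (fubini ds (fun n x => g' (idx n perm) x)).
  - rewrite <- (Cprod_reindex _ _ Hperm F'). apply Cprod_ext.
    intros k Hk. apply in_seq in Hk. unfold F', linner. rewrite nth_dims by lia.
    reflexivity.
Qed.

Lemma outcome_onb k i : In i (outcomes ds perm) -> (k < length ds)%nat ->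
  local_onb (nth k (dims_in_order ds perm) 0%nat) (B (firstn k i)).
Proof.
  intros Hi Hk. apply (proj2 Hs); auto. apply firstn_all_idx. exact Hi.
Qed.

Lemma outcome_bound i : In i (outcomes ds perm) ->
  length i = length ds /\
  forall k, (k < length ds)%nat -> (nth k i 0%nat < nth k (dims_in_order ds perm) 0%nat)%nat.
Proof.
  unfold outcomes. rewrite all_idx_spec, dims_length. auto.
Qed.

Lemma outcome_ortho i i' : In i (outcomes ds perm) -> In i' (outcomes ds perm) ->
  ginner ds (outcome_vec ds perm B i) (outcome_vec ds perm B i') =
  if list_eq_dec PeanoNat.Nat.eq_dec i i' then C1 else C0.
Proof.
  intros Hi Hi'. rewrite outcome_inner.
  destruct (outcome_bound _ Hi) as [Hl Hb]. destruct (outcome_bound _ Hi') as [Hl' Hb'].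
  destruct (list_eq_dec PeanoNat.Nat.eq_dec i i') as [<-|Hne].
  - apply Cprod_one. intros k Hk. apply in_seq in Hk.
    assert (Hk' : (k < length ds)%nat) by lia.
    rewrite (outcome_onb k i Hi Hk'). rewrite PeanoNat.Nat.eqb_refl. reflexivity.
    apply Hb; lia. apply Hb; lia.
  - assert (E : length i = length i') by congruence.
    destruct (first_diff i i' E Hne) as [k [Hk [Hf Hn]]].
    apply (Cprod_zero _ _ k). apply in_seq. lia.
    assert (Hk' : (k < length ds)%nat) by lia.
    rewrite <- Hf. rewrite (outcome_onb k i Hi Hk').
    apply PeanoNat.Nat.eqb_neq in Hn. rewrite Hn. reflexivity.
    apply Hb; lia. apply Hb'; lia.
Qed.

End Scheme.

Lemma parseval ds (K : list (list nat)) (u : list nat -> gvec) psi :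
  length K = length (all_idx ds) ->
  (forall a b, (a < length K)%nat -> (b < length K)%nat ->
     ginner ds (u (nth a K [])) (u (nth b K [])) = if Nat.eqb a b then C1 else C0) ->
  Rsum K (fun k => Cnorm2 (ginner ds (u k) psi)) = Cre (ginner ds psi psi).
Proof.
  intros HL HO.
  rewrite (Rsum_nth K []). rewrite HL in *.
  remember (all_idx ds) as X eqn:HX.
  remember (length X) as n eqn:Hn.
  set (U := fun a x => u (nth a K []) (nth x X [])).
  set (P := fun x => psi (nth x X [])).
  assert (Hg : forall v w, ginner ds v w =
     Csum (seq 0 n) (fun x => Cmul (Cconj (v (nth x X []))) (w (nth x X [])))).
  { intros. unfold ginner. rewrite <- HX, Hn. exact (Csum_nth X [] (fun j => Cmul (Cconj (v j)) (w j))). }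
  assert (Hrow : forall a b, (a < n)%nat -> (b < n)%nat ->
     Csum (seq 0 n) (fun x => Cmul (Cconj (U a x)) (U b x)) = if Nat.eqb a b then C1 else C0).
  { intros a b Ha Hb. unfold U. rewrite <- Hg. apply HO; auto. }
  pose proof (Bridge.cols_orthonormal n U Hrow) as Hcol.
  set (c := fun a => Csum (seq 0 n) (fun x => Cmul (Cconj (U a x)) (P x))).
  transitivity (Rsum (seq 0 n) (fun a => Cre (Cmul (Cconj (c a)) (c a)))).
  { apply Rsum_ext. intros a _. rewrite Hg. change (Cnorm2 (c a) = Cre (Cmul (Cconj (c a)) (c a))). generalize (c a). intros z. unfold Cnorm2. simpl. ring. }
  rewrite Rsum_Cre. rewrite Hg. f_equal.
  transitivity (Csum (seq 0 n) (fun a => Csum (seq 0 n) (fun y => Csum (seq 0 n) (fun x =>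
     Cmul (Cmul (Cconj (P y)) (P x)) (Cmul (U a y) (Cconj (U a x))))))).
  { apply Csum_ext. intros a _. unfold c. rewrite Csum_conj, <- Csum_mul_r.
    apply Csum_ext. intros y _. rewrite <- Csum_mul_l. apply Csum_ext. intros x _. Csolve. }
  rewrite Csum_swap. apply Csum_ext. intros y Hy. rewrite Csum_swap.
  apply in_seq in Hy.
  transitivity (Csum (seq 0 n) (fun x => Cmul (Cmul (Cconj (P y)) (P x))
     (if Nat.eqb y x then C1 else C0))).
  { apply Csum_ext. intros x Hx. apply in_seq in Hx. rewrite <- (Hcol y x) by lia.
    apply Csum_mul_l. }
  rewrite Csum_delta. reflexivity. apply seq_NoDup. apply in_seq. lia.
Qed.

Lemma Cnorm2_nonneg z : 0 <= Cnorm2 z.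
Proof. unfold Cnorm2. nra. Qed.

Lemma Cnorm2_zero z : Cnorm2 z = 0 -> z = C0.
Proof. unfold Cnorm2. intros H. apply C_ext; simpl; nra. Qed.

Section Main.
Variables (ds perm : list nat) (B : list nat -> nat -> nat -> C) (psi : gvec).
Hypothesis Hs : is_scheme ds perm B.

Let Hperm : Permutation perm (seq 0 (length ds)) := proj1 Hs.

Lemma prob_sum : unit_vec ds psi -> Rsum (outcomes ds perm) (prob ds perm B psi) = 1.
Proof.
  intros Hpsi. unfold prob. rewrite parseval.
  - rewrite Hpsi. reflexivity.
  - apply (length_outcomes ds perm B Hs).
  - intros a b Ha Hb. rewrite outcome_ortho; auto; try (apply nth_In; auto).
    destruct (list_eq_dec PeanoNat.Nat.eq_dec _ _) as [E|E];
    destruct (PeanoNat.Nat.eqb_spec a b); auto.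
    + exfalso. apply n. eapply NoDup_nth; eauto. apply NoDup_all_idx.
    + subst. congruence.
Qed.

Lemma omega_sep : unit_vec ds psi -> fully_separable ds (omega ds perm B psi).
Proof.
  intros Hpsi.
  set (O := outcomes ds perm).
  exists (length O), (fun j => prob ds perm B psi (nth j O [])),
    (fun j n x y => let i := nth j O [] in let k := idx n perm in
       Cmul (B (firstn k i) (nth k i 0%nat) x) (Cconj (B (firstn k i) (nth k i 0%nat) y))).
  split; [|split; [|split]].
  - intros; apply Cnorm2_nonneg.
  - rewrite <- (Rsum_nth O [] (prob ds perm B psi)). apply prob_sum; auto.
  - intros j n Hj Hn.
    assert (Hi : In (nth j O []) (outcomes ds perm)) by (apply nth_In; auto).
    set (i := nth j O []) in *.
    set (k := idx n perm).
    assert (Hk : (k < length ds)%nat) by (apply (idx_lt _ _ Hperm); auto).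
    assert (Hd : nth n ds 0%nat = nth k (dims_in_order ds perm) 0%nat).
    { rewrite (nth_dims ds perm B Hs); auto. unfold k. rewrite (nth_idx_perm _ _ Hperm); auto. }
    destruct (outcome_bound _ _ _ Hs _ Hi) as [_ Hb].
    pose proof (outcome_onb _ _ _ Hs k i Hi Hk (nth k i 0%nat) (nth k i 0%nat) (Hb k Hk) (Hb k Hk))
      as Hone.
    rewrite PeanoNat.Nat.eqb_refl in Hone.
    simpl. rewrite Hd. fold k. fold i.
    set (d := nth k (dims_in_order ds perm) 0%nat) in *.
    set (ph := B (firstn k i) (nth k i 0%nat)) in *.
    split; [|split].
    + intros x y _ _. Csolve.
    + intros v.
      set (cc := linner d ph v).
      assert (E : linner d v (fun x => Csum (seq 0 d) (fun y => Cmul (Cmul (ph x) (Cconj (ph y))) (v y))) = Cmul (Cconj cc) cc).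
      2:{ rewrite E. simpl. nra. }
      unfold linner at 1.
      transitivity (Csum (seq 0 d) (fun x => Cmul (Cmul (Cconj (v x)) (ph x)) cc)).
      { apply Csum_ext. intros x _. unfold cc, linner. rewrite <- !Csum_mul_l.
        apply Csum_ext. intros y _. Csolve. }
      rewrite Csum_mul_r. f_equal. unfold cc, linner. rewrite Csum_conj.
      apply Csum_ext. intros x _. Csolve.
    + rewrite <- Hone. unfold linner. apply Csum_ext. intros x _. Csolve.
  - intros i i' _ _. unfold omega. fold O. rewrite (Csum_nth O []).
    apply Csum_ext. intros j _. f_equal.
    unfold outcome_vec. rewrite Cprod_conj, <- Cprod_mul.
    exact (Cprod_reindex _ _ Hperm (fun k x =>
       Cmul (B (firstn k (nth j O [])) (nth k (nth j O []) 0%nat) (nth x i 0%nat))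
            (Cconj (B (firstn k (nth j O [])) (nth k (nth j O []) 0%nat) (nth x i' 0%nat))))).
Qed.

Lemma omega_nle : neg_log_expect ds (omega ds perm B psi) psi
       (entropy (outcomes ds perm) (prob ds perm B psi)).
Proof.
  exists (outcomes ds perm), (outcome_vec ds perm B), (prob ds perm B psi).
  split; [apply NoDup_all_idx|].
  split; [apply (length_outcomes ds perm B Hs)|].
  split; [intros; apply outcome_ortho; auto|].
  split; [intros; apply Cnorm2_nonneg|].
  split; [intros; reflexivity|].
  split; [intros k _ H0; apply Cnorm2_zero; exact H0|].
  reflexivity.
Qed.
End Main.

Theorem mainTheorem3 (ds : list nat) (psi : gvec) (Hpsi : unit_vec ds psi) :
  (forall emb er : R,
     is_min (EMB_value ds psi) emb -> is_min (ER_value ds psi) er -> er <= emb) /\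
  (forall (perm : list nat) (B : list nat -> nat -> nat -> C),
     is_scheme ds perm B ->
     fully_separable ds (omega ds perm B psi) /\
     neg_log_expect ds (omega ds perm B psi) psi
       (entropy (outcomes ds perm) (prob ds perm B psi))).
Proof.
  assert (P2 : forall (perm : list nat) (B : list nat -> nat -> nat -> C),
     is_scheme ds perm B ->
     fully_separable ds (omega ds perm B psi) /\
     neg_log_expect ds (omega ds perm B psi) psi
       (entropy (outcomes ds perm) (prob ds perm B psi))).
  { intros perm B Hs. split; [apply omega_sep|apply omega_nle]; auto. }
  split; auto.
  intros emb er [[perm [B [Hs Hemb]]] _] [_ Hmin].
  apply Hmin. exists (omega ds perm B psi). rewrite Hemb. apply P2; auto.
Qed.
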